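(* If $N$ is a normal form, i.e. $N$ is generated by the grammar $N ::= xN_1\cdots N_k \mid \lambda x.N \mid \mu\alpha.[\beta]N$ ($k\ge0$), then there exist a basis $\Gamma$, a name context $\Delta$ and $\kappa\in\mathcal{T}_C$ such that $\Gamma\vdash N:\kappa\to\nu\mid\Delta$ is derivable in the intersection type system.
   Context: $\lambda\mu$-terms: $M,N ::= x \mid \lambda x.M \mid MN \mid \mu\alpha.[\beta]M$ over disjoint denumerable sets of term variables and names ($\lambda$ binds $x$, $\mu$ binds $\alpha$; bound and free variables/names assumed distinct). Types: with constant $\nu$ and symbol $\omega$ (not itself a type), $\mathcal{T}_D:\ \delta ::= \nu \mid \omega\to\nu \mid \kappa\to\nu \mid \delta\wedge\delta$; $\mathcal{T}_C:\ \kappa ::= \delta\times\omega \mid \delta\times\kappa \mid \kappa\wedge\kappa$ ($\times$ right-associative). $\le$ is the least preorder on $\mathcal{T}_D$ and on $\mathcal{T}_C$ such that: $\sigma\wedge\tau\le\sigma$; $\sigma\wedge\tau\le\tau$; $\nu\le\omega\to\nu$; $\omega\to\nu\le\nu$; $\delta_1\times\delta_2\times\omega\le\delta_1\times\omega$; $(\delta_1\times\omega)\wedge(\delta_2\times\kappa)\le(\delta_1\wedge\delta_2)\times\kappa$; $(\delta_1\times\kappa_1)\wedge(\delta_2\times\kappa_2)\le(\delta_1\wedge\delta_2)\times(\kappa_1\wedge\kappa_2)$; $\delta_1\le\delta_2\Rightarrow\delta_1\times\omega\le\delta_2\times\omega$; $\delta_1\le\delta_2,\kappa_1\le\kappa_2\Rightarrow\delta_1\times\kappa_1\le\delta_2\times\kappa_2$;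 $\sigma\le\tau_1,\sigma\le\tau_2\Rightarrow\sigma\le\tau_1\wedge\tau_2$; $\kappa_2\le\kappa_1\Rightarrow\kappa_1\to\nu\le\kappa_2\to\nu$. Typing: bases $\Gamma$ (finite maps variables $\to\mathcal{T}_D$), name contexts $\Delta$ (finite maps names $\to\mathcal{T}_C$); judgements $\Gamma\vdash M:\delta\mid\Delta$, with variables of $\Gamma$ and names of $\Delta$ not bound in $M$. Rules: (ax) $\Gamma,x{:}\delta\vdash x:\delta\mid\Delta$; (abs) from $\Gamma,x{:}\delta\vdash M:\kappa\to\nu\mid\Delta$ infer $\Gamma\vdash\lambda x.M:\delta\times\kappa\to\nu\mid\Delta$; (app) from $\Gamma\vdash M:\delta\times\kappa\to\nu\mid\Delta$ and $\Gamma\vdash N:\delta\mid\Delta$ infer $\Gamma\vdash MN:\kappa\to\nu\mid\Delta$ ($\kappa\in\mathcal{T}_C$ or $\kappa=\omega$); ($\mu$) from $\Gamma\vdash M:\kappa'\to\nu\mid\alpha{:}\kappa,\beta{:}\kappa',\Delta$ infer $\Gamma\vdash\mu\alpha.[\beta]M:\kappa\to\nu\mid\beta{:}\kappa',\Delta$ ($\beta\neq\alpha$), and from $\Gamma\vdash M:\kappa\to\nu\mid\alpha{:}\kappa,\Delta$ infer $\Gamma\vdash\mu\alpha.[\alpha]M:\kappa\to\nu\mid\Delta$; ($\le$) from $\Gamma\vdash M:\delta\mid\Delta$, $\delta\le\delta'$ infer $\Gamma\vdash M:\delta'\mid\Delta$; ($\wedge$) from $\Gamma\vdash M:\delta\mid\Delta$,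 $\Gamma\vdash M:\delta'\mid\Delta$ infer $\Gamma\vdash M:\delta\wedge\delta'\mid\Delta$. *)

(* Defs.v *)
From Stdlib Require Import List Arith.
Import ListNotations.

(* Term variables and names are both represented by nat (disjoint sorts by
   construction: they live in different positions of the syntax). *)
Inductive term : Type :=
| Var : nat -> term
| Lam : nat -> term -> term
| App : term -> term -> term
| Mu  : nat -> nat -> term -> term.   (* Mu a b M  =  mu a.[b]M *)

Inductive dtype : Type :=
| Nu    : dtype
| OArr  : dtype                       (* omega -> nu *)
| CArr  : ctype -> dtype
| DAnd  : dtype -> dtype -> dtype
with ctype : Type :=
| TOm   : dtype -> ctype              (* delta x omega *)
| TC    : dtype -> ctype -> ctype     (* delta x kappa *)
| CAnd  : ctype -> ctype -> ctype.

(* "kappa -> nu" and "delta x kappa" where kappa ranges over T_C or omega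
   (None = omega). *)
Definition arr (k : option ctype) : dtype :=
  match k with None => OArr | Some k => CArr k end.
Definition times (d : dtype) (k : option ctype) : ctype :=
  match k with None => TOm d | Some k => TC d k end.

Inductive leD : dtype -> dtype -> Prop :=
| leD_refl : forall d, leD d d
| leD_trans : forall d1 d2 d3, leD d1 d2 -> leD d2 d3 -> leD d1 d3
| leD_andl : forall s t, leD (DAnd s t) s
| leD_andr : forall s t, leD (DAnd s t) t
| leD_nu_om : leD Nu OArr
| leD_om_nu : leD OArr Nu
| leD_glb : forall s t1 t2, leD s t1 -> leD s t2 -> leD s (DAnd t1 t2)
| leD_arr : forall k1 k2, leC k2 k1 -> leD (CArr k1) (CArr k2)
with leC : ctype -> ctype -> Prop :=
| leC_refl : forall k, leC k k
| leC_trans : forall k1 k2 k3, leC k1 k2 -> leC k2 k3 -> leC k1 k3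
| leC_andl : forall s t, leC (CAnd s t) s
| leC_andr : forall s t, leC (CAnd s t) t
| leC_drop : forall d1 d2, leC (TC d1 (TOm d2)) (TOm d1)
| leC_and_om : forall d1 d2 k,
    leC (CAnd (TOm d1) (TC d2 k)) (TC (DAnd d1 d2) k)
| leC_and_tc : forall d1 d2 k1 k2,
    leC (CAnd (TC d1 k1) (TC d2 k2)) (TC (DAnd d1 d2) (CAnd k1 k2))
| leC_mon_om : forall d1 d2, leD d1 d2 -> leC (TOm d1) (TOm d2)
| leC_mon_tc : forall d1 d2 k1 k2, leD d1 d2 -> leC k1 k2 -> leC (TC d1 k1) (TC d2 k2)
| leC_glb : forall s t1 t2, leC s t1 -> leC s t2 -> leC s (CAnd t1 t2).

(* Bases and name contexts as partial maps (finiteness imposed where needed). *)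
Definition basis := nat -> option dtype.
Definition nctx := nat -> option ctype.

Definition upd {A} (f : nat -> option A) (x : nat) (a : A) : nat -> option A :=
  fun y => if Nat.eqb y x then Some a else f y.

Definition finite_dom {A} (f : nat -> option A) : Prop :=
  exists n, forall x, n <= x -> f x = None.

Inductive typing : basis -> term -> dtype -> nctx -> Prop :=
| T_ax : forall G D x d, G x = Some d -> typing G (Var x) d D
| T_abs : forall G D x d M k,
    G x = None ->
    typing (upd G x d) M (arr k) D ->
    typing G (Lam x M) (CArr (times d k)) D
| T_app : forall G D M N d k,
    typing G M (CArr (times d k)) D ->
    typing G N d D ->
    typing G (App M N) (arr k) D
| T_mu1 : forall G D M a b k k',
    a <> b -> D a = None -> D b = Some k' ->
    typing G M (CArr k') (upd D a k) ->
    typing G (Mu a b M) (CArr k) D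
| T_mu2 : forall G D M a k,
    D a = None ->
    typing G M (CArr k) (upd D a k) ->
    typing G (Mu a a M) (CArr k) D
| T_le : forall G D M d d', typing G M d D -> leD d d' -> typing G M d' D
| T_and : forall G D M d d', typing G M d D -> typing G M d' D ->
    typing G M (DAnd d d') D.

Inductive neutral : term -> Prop :=
| ne_var : forall x, neutral (Var x)
| ne_app : forall M N, neutral M -> nf N -> neutral (App M N)
with nf : term -> Prop :=
| nf_ne : forall M, neutral M -> nf M
| nf_lam : forall x M, nf M -> nf (Lam x M)
| nf_mu : forall a b M, nf M -> nf (Mu a b M).

Fixpoint fv (M : term) : list nat :=
  match M with
  | Var x => [x]
  | Lam x M => remove Nat.eq_dec x (fv M)
  | App M N => fv M ++ fv N
  | Mu _ _ M => fv M
  end.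
Fixpoint fn (M : term) : list nat :=
  match M with
  | Var _ => []
  | Lam _ M => fn M
  | App M N => fn M ++ fn N
  | Mu a b M => remove Nat.eq_dec a (b :: fn M)
  end.
Fixpoint bv (M : term) : list nat :=
  match M with
  | Var _ => []
  | Lam x M => x :: bv M
  | App M N => bv M ++ bv N
  | Mu _ _ M => bv M
  end.
Fixpoint bn (M : term) : list nat :=
  match M with
  | Var _ => []
  | Lam _ M => bn M
  | App M N => bn M ++ bn N
  | Mu a _ M => a :: bn M
  end.

(* Variable convention: no binder binds a variable/name that is free in the
   term or already in scope (bound and free variables/names distinct). *)
Fixpoint conv (sx sa : list nat) (M : term) : Prop :=
  match M with
  | Var _ => True
  | Lam x M => ~ In x sx /\ conv (x :: sx) sa M
  | App M N => conv sx sa M /\ conv sx sa N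
  | Mu a _ M => ~ In a sa /\ conv sx (a :: sa) M
  end.
Definition var_convention (M : term) : Prop := conv (fv M) (fn M) M.

(* Main.v *)
Require Import Defs.
From Stdlib Require Import List Arith Lia.
Import ListNotations.

Definition sat (G R : basis) := forall x t, R x = Some t -> exists t', G x = Some t' /\ leD t' t.
Definition satC (D S : nctx) := forall a k, S a = Some k -> exists k', D a = Some k' /\ leC k' k.

Definition rm {A} (f : nat -> option A) x : nat -> option A :=
  fun y => if Nat.eqb y x then None else f y.

Definition mD (o1 o2 : option dtype) := match o1, o2 with
 | Some a, Some b => Some (DAnd a b) | Some a, None => Some a | None, o => o end.
Definition mC (o1 o2 : option ctype) := match o1, o2 with
 | Some a, Some b => Some (CAnd a b) | Some a, None => Some a | None, o => o end.

Lemma sat_l G R1 R2 : sat G (fun x => mD (R1 x) (R2 x)) -> sat G R1.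
Proof. intros H x t Hx. specialize (H x). cbv beta in H. rewrite Hx in H. destruct (R2 x) as [u|]; simpl in H.
 - destruct (H _ eq_refl) as [t' [H1 H2]]. exists t'. split; auto.
   eapply leD_trans; [exact H2| apply leD_andl].
 - apply H; auto. Qed.
Lemma sat_r G R1 R2 : sat G (fun x => mD (R1 x) (R2 x)) -> sat G R2.
Proof. intros H x t Hx. specialize (H x). cbv beta in H. rewrite Hx in H. destruct (R1 x) as [u|]; simpl in H.
 - destruct (H _ eq_refl) as [t' [H1 H2]]. exists t'. split; auto.
   eapply leD_trans; [exact H2| apply leD_andr].
 - apply H; auto. Qed.
Lemma satC_l G R1 R2 : satC G (fun x => mC (R1 x) (R2 x)) -> satC G R1.
Proof. intros H x t Hx. specialize (H x). cbv beta in H. rewrite Hx in H. destruct (R2 x) as [u|]; simpl in H.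
 - destruct (H _ eq_refl) as [t' [H1 H2]]. exists t'. split; auto.
   eapply leC_trans; [exact H2| apply leC_andl].
 - apply H; auto. Qed.
Lemma satC_r G R1 R2 : satC G (fun x => mC (R1 x) (R2 x)) -> satC G R2.
Proof. intros H x t Hx. specialize (H x). cbv beta in H. rewrite Hx in H. destruct (R1 x) as [u|]; simpl in H.
 - destruct (H _ eq_refl) as [t' [H1 H2]]. exists t'. split; auto.
   eapply leC_trans; [exact H2| apply leC_andr].
 - apply H; auto. Qed.

Lemma conv_bv : forall M sx sa y, conv sx sa M -> In y (bv M) -> ~ In y sx.
Proof. induction M as [x|x M IH|M IH1 N IH2|a b M IH]; simpl; intros sx sa y Hc Hy.
 - destruct Hy.
 - destruct Hc as [H1 H2]. destruct Hy as [<-|Hy]; auto. intro Hin.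
   apply (IH _ _ _ H2 Hy). simpl; auto.
 - destruct Hc. apply in_app_or in Hy. destruct Hy; eauto.
 - destruct Hc; eauto.
Qed.
Lemma conv_bn : forall M sx sa y, conv sx sa M -> In y (bn M) -> ~ In y sa.
Proof. induction M as [x|x M IH|M IH1 N IH2|a b M IH]; simpl; intros sx sa y Hc Hy.
 - destruct Hy.
 - destruct Hc as [H1 H2]. eauto.
 - destruct Hc. apply in_app_or in Hy. destruct Hy; eauto.
 - destruct Hc as [H1 H2]. destruct Hy as [<-|Hy]; auto. intro Hin.
   apply (IH _ _ _ H2 Hy). simpl; auto.
Qed.

Definition Pne (M : term) : Prop := forall sx sa, conv sx sa M -> forall kap : option ctype,
  exists (R : basis) (Sc : nctx),
   (forall x t, R x = Some t -> In x (fv M)) /\ (forall a k, Sc a = Some k -> In a (fn M)) /\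
   forall G D, sat G R -> satC D Sc -> (forall y, In y (bv M) -> G y = None) ->
     (forall a, In a (bn M) -> D a = None) -> typing G M (arr kap) D.
Definition Pnf (M : term) : Prop := forall sx sa, conv sx sa M ->
  exists (R : basis) (Sc : nctx) (k : ctype),
   (forall x t, R x = Some t -> In x (fv M)) /\ (forall a k, Sc a = Some k -> In a (fn M)) /\
   forall G D, sat G R -> satC D Sc -> (forall y, In y (bv M) -> G y = None) ->
     (forall a, In a (bn M) -> D a = None) -> typing G M (CArr k) D.

Lemma case_var x : Pne (Var x).
Proof. intros sx sa _ kap.
 exists (upd (fun _ => None) x (arr kap)), (fun _ => None). split; [|split].
 - intros y t H. unfold upd in H. revert H. destruct (Nat.eqb_spec y x); intro H;
   [subst; simpl; auto| discriminate].
 - intros; discriminate.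
 - intros G D HG _ _ _. destruct (HG x (arr kap)) as [t' [H1 H2]].
   { unfold upd. rewrite Nat.eqb_refl. reflexivity. }
   eapply T_le; [apply T_ax; exact H1 | exact H2].
Qed.

Lemma case_app M N : Pne M -> Pnf N -> Pne (App M N).
Proof. intros HM HN sx sa [C1 C2] kap.
 destruct (HN sx sa C2) as (R2 & S2 & kN & D2 & E2 & T2).
 destruct (HM sx sa C1 (Some (times (CArr kN) kap))) as (R1 & S1 & D1 & E1 & T1).
 exists (fun x => mD (R1 x) (R2 x)), (fun a => mC (S1 a) (S2 a)). split; [|split].
 - intros x t H. simpl. apply in_or_app.
   destruct (R1 x) eqn:E; destruct (R2 x) eqn:F; simpl in H; try discriminate;
   first [left; eapply D1; eassumption | right; eapply D2; eassumption].
 - intros x t H. simpl. apply in_or_app.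
   destruct (S1 x) eqn:E; destruct (S2 x) eqn:F; simpl in H; try discriminate;
   first [left; eapply E1; eassumption | right; eapply E2; eassumption].
 - intros G D HG HD HB HN'. simpl in HB, HN'.
   apply T_app with (d := CArr kN).
   + apply T1.
     * eapply sat_l; eauto.
     * eapply satC_l; eauto.
     * intros; apply HB, in_or_app; auto.
     * intros; apply HN', in_or_app; auto.
   + apply T2.
     * eapply sat_r; eauto.
     * eapply satC_r; eauto.
     * intros; apply HB, in_or_app; auto.
     * intros; apply HN', in_or_app; auto.
Qed.

Lemma case_ne M : Pne M -> Pnf M.
Proof. intros H sx sa C. destruct (H sx sa C (Some (TOm Nu))) as (R & Sc & D1 & E1 & T1).
 exists R, Sc, (TOm Nu). split; [|split]; auto. Qed.

Lemma case_lam x M : Pnf M -> Pnf (Lam x M).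
Proof. intros H sx sa [Cx C]. destruct (H (x::sx) sa C) as (R & Sc & k & D1 & E1 & T1).
 exists (rm R x), Sc, (times (match R x with Some t => t | None => Nu end) (Some k)).
 split; [|split].
 - intros y t Hy. unfold rm in Hy. revert Hy. destruct (Nat.eqb_spec y x); intro Hy; [discriminate|].
   simpl. apply in_in_remove; eauto.
 - simpl; exact E1.
 - intros G D HG HD HB HN. simpl in HB, HN.
   apply T_abs. { apply HB; left; reflexivity. }
   apply T1; [ | exact HD | | exact HN ].
   + intros y t Hy. unfold upd. destruct (Nat.eqb_spec y x).
     * subst y. rewrite Hy. exists t; split; auto. apply leD_refl.
     * apply HG. unfold rm. destruct (Nat.eqb_spec y x); [contradiction | exact Hy].
   + intros y Hy. unfold upd. destruct (Nat.eqb_spec y x).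
     * subst y. exfalso. apply (conv_bv M (x::sx) sa x C Hy). left; reflexivity.
     * apply HB. right; exact Hy.
Qed.

Lemma case_mu a b M : Pnf M -> Pnf (Mu a b M).
Proof. intros H sx sa [Ca C]. destruct (H sx (a::sa) C) as (R & Sc & k & D1 & E1 & T1).
 assert (Hab: forall c, In c (bn M) -> c <> a).
 { intros c Hc E. subst c. apply (conv_bn M sx (a::sa) a C Hc). left; reflexivity. }
 destruct (Nat.eq_dec a b) as [<-|Hne].
 - set (kr := match Sc a with Some k0 => CAnd k0 k | None => k end).
   exists R, (rm Sc a), kr. split; [|split].
   + exact D1.
   + intros c kc Hc. unfold rm in Hc. revert Hc. destruct (Nat.eqb_spec c a); intro Hc; [discriminate|].
     change (In c (remove Nat.eq_dec a (a :: fn M))). apply in_in_remove; auto. right. eauto.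
   + intros G D HG HD HB HN. simpl in HB, HN.
     apply T_mu2. { apply HN; left; reflexivity. }
     eapply T_le. apply T1; [exact HG| | exact HB | ].
     * intros c kc Hc. unfold upd. destruct (Nat.eqb_spec c a).
       -- subst c. exists kr. split; auto. unfold kr. rewrite Hc. apply leC_andl.
       -- apply HD. unfold rm. destruct (Nat.eqb_spec c a); [contradiction | exact Hc].
     * intros c Hc. unfold upd. destruct (Nat.eqb_spec c a).
       { exfalso; eapply Hab; eauto. }
       apply HN; right; exact Hc.
     * apply leD_arr. unfold kr. destruct (Sc a); [apply leC_andr | apply leC_refl].
 - set (kr := match Sc a with Some k0 => k0 | None => TOm Nu end).
   set (kb := match Sc b with Some k0 => CAnd k0 k | None => k end).
   exists R, (upd (rm Sc a) b kb), kr. split; [|split].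
   + exact D1.
   + intros c kc Hc. unfold upd, rm in Hc. change (In c (remove Nat.eq_dec a (b :: fn M))). revert Hc. destruct (Nat.eqb_spec c b); intro Hc.
     * subst c. apply in_in_remove; [intro E; apply Hne; symmetry; exact E | left; reflexivity].
     * revert Hc. destruct (Nat.eqb_spec c a); intro Hc; [discriminate|].
       apply in_in_remove; auto. right; eauto.
   + intros G D HG HD HB HN. simpl in HB, HN.
     destruct (HD b kb) as [k'' [Hb Hle]].
     { unfold upd. rewrite Nat.eqb_refl. reflexivity. }
     apply (T_mu1 G D M a b kr k''); [exact Hne | apply HN; left; reflexivity | exact Hb | ].
     eapply T_le. apply T1; [exact HG | | exact HB | ].
     * intros c kc Hc. unfold upd. destruct (Nat.eqb_spec c a).
       -- subst c. exists kr. split; auto. unfold kr. rewrite Hc. apply leC_refl.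
       -- destruct (Nat.eqb_spec c b).
          ++ subst c. exists k''. split; auto. eapply leC_trans; [exact Hle|].
             unfold kb. rewrite Hc. apply leC_andl.
          ++ apply HD. unfold upd, rm.
             destruct (Nat.eqb_spec c b); [contradiction|].
             destruct (Nat.eqb_spec c a); [contradiction|exact Hc].
     * intros c Hc. unfold upd. destruct (Nat.eqb_spec c a).
       { exfalso; eapply Hab; eauto. }
       apply HN; right; exact Hc.
     * apply leD_arr. eapply leC_trans; [exact Hle|]. unfold kb.
       destruct (Sc b); [apply leC_andr|apply leC_refl].
Qed.

Scheme ne_ind2 := Minimality for neutral Sort Prop
  with nf_ind2 := Minimality for nf Sort Prop.

Lemma main_nf : forall N, nf N -> Pnf N.
Proof.
  apply (nf_ind2 Pne Pnf).
  - intros; apply case_var.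
  - intros; apply case_app; auto.
  - intros; apply case_ne; auto.
  - intros; apply case_lam; auto.
  - intros; apply case_mu; auto.
Qed.

Lemma in_le_max x l : In x l -> x <= list_max l.
Proof. intro H. assert (F : Forall (fun k => k <= list_max l) l) by (apply list_max_le; lia).
  rewrite Forall_forall in F. auto. Qed.

Theorem mainTheorem12 :
  forall N : term, nf N -> var_convention N ->
  exists (G : basis) (D : nctx) (k : ctype),
    finite_dom G /\ finite_dom D /\
    (forall x, In x (bv N) -> G x = None) /\
    (forall a, In a (bn N) -> D a = None) /\
    typing G N (CArr k) D.
Proof.
  intros N HN HC.
  destruct (main_nf N HN (fv N) (fn N) HC) as (R & Sc & k & D1 & E1 & T1).
  exists R, Sc, k. split; [|split; [|split; [|split]]].
  - exists (Datatypes.S (list_max (fv N))). intros x Hx.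
    destruct (R x) eqn:E; auto. exfalso. apply D1 in E. apply in_le_max in E. lia.
  - exists (Datatypes.S (list_max (fn N))). intros x Hx.
    destruct (Sc x) eqn:E; auto. exfalso. apply E1 in E. apply in_le_max in E. lia.
  - intros y Hy. destruct (R y) eqn:E; auto. exfalso. apply D1 in E.
    exact (conv_bv N _ _ y HC Hy E).
  - intros y Hy. destruct (Sc y) eqn:E; auto. exfalso. apply E1 in E.
    exact (conv_bn N _ _ y HC Hy E).
  - assert (HB : forall y, In y (bv N) -> R y = None).
    { intros y Hy. destruct (R y) eqn:E; auto. exfalso. apply D1 in E.
      exact (conv_bv N _ _ y HC Hy E). }
    assert (HBn : forall y, In y (bn N) -> Sc y = None).
    { intros y Hy. destruct (Sc y) eqn:E; auto. exfalso. apply E1 in E.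
      exact (conv_bn N _ _ y HC Hy E). }
    apply T1; auto.
    + intros x t H. exists t; split; auto. apply leD_refl.
    + intros x t H. exists t; split; auto. apply leC_refl.
Qed.
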